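(* Let $\mathbf{A}\in\mathbb{C}^{N\times N}$ be a nonzero matrix (the weighted adjacency matrix of a graph), and let $\lambda_{\max}$ denote an eigenvalue of $\mathbf{A}$ of largest magnitude, i.e. $|\lambda_{\max}|\ge|\lambda|$ for every eigenvalue $\lambda$ of $\mathbf{A}$. Let $\lambda_m,\lambda_n\in\mathbb{C}$ be two distinct eigenvalues of $\mathbf{A}$ with corresponding eigenvectors $\mathbf{v}_m,\mathbf{v}_n$, normalized so that $\|\mathbf{v}_m\|_1=\|\mathbf{v}_n\|_1=1$. If $\big||\lambda_{\max}|-\lambda_m\big|<\big||\lambda_{\max}|-\lambda_n\big|$ (i.e. $\lambda_m$ is closer than $\lambda_n$ to the real number $|\lambda_{\max}|$ in the complex plane), then $\mathrm{TV}_G(\mathbf{v}_m)<\mathrm{TV}_G(\mathbf{v}_n)$.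
   Context: For a graph signal $\mathbf{s}\in\mathbb{C}^N$, the total variation on the graph is $\mathrm{TV}_G(\mathbf{s})=\|\mathbf{s}-\mathbf{A}^{\mathrm{norm}}\mathbf{s}\|_1$, where $\mathbf{A}^{\mathrm{norm}}=\frac{1}{|\lambda_{\max}|}\mathbf{A}$ is the normalized adjacency matrix. *)

(* Defs.v *)
From HB Require Import structures.
From mathcomp Require Import all_boot all_order all_algebra.
From mathcomp Require Import complex reals.
Set Implicit Arguments. Unset Strict Implicit. Unset Printing Implicit Defensive.
Import Order.TTheory GRing.Theory Num.Theory.
Local Open Scope ring_scope.
Local Open Scope complex_scope.

Definition l1norm (R : realType) (N : nat) (v : 'cV[R[i]]_N) : R[i] :=
  \sum_(k < N) `|v k 0|.

Definition Anorm (R : realType) (N : nat) (A : 'M[R[i]]_N) (lmax : R[i]) :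
  'M[R[i]]_N := (`|lmax|)^-1 *: A.

Definition TV_G (R : realType) (N : nat) (A : 'M[R[i]]_N) (lmax : R[i])
  (s : 'cV[R[i]]_N) : R[i] := l1norm (s - Anorm A lmax *m s).

(* Main.v *)
Require Import Defs.
From HB Require Import structures.
From mathcomp Require Import all_boot all_order all_algebra.
From mathcomp Require Import complex reals.
Import Order.TTheory GRing.Theory Num.Theory.
Local Open Scope ring_scope.
Local Open Scope complex_scope.

Lemma eig_det (F : fieldType) n (A : 'M[F]_n) a :
  eigenvalue A a = (\det (a%:M - A) == 0).
Proof.
  apply/eigenvalueP/det0P=> [[v Av_av v_nz] | [v v_nz Av_av]]; exists v => //.
    by rewrite mulmxBr Av_av mul_mx_scalar subrr.
  by apply/eqP; rewrite -mul_mx_scalar eq_sym -subr_eq0 -mulmxBr Av_av.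
Qed.

Lemma col_eig (F : fieldType) n (A : 'M[F]_n) a (v : 'cV_n) :
  v != 0 -> A *m v = a *: v -> eigenvalue A a.
Proof.
move=> vnz Av.
have : eigenvalue A^T a.
  apply/eigenvalueP; exists v^T; last by rewrite trmx_eq0.
  by rewrite -trmx_mul Av linearZ.
by rewrite !eig_det -det_tr linearB /= trmxK tr_scalar_mx.
Qed.

Lemma l1_nz (R : realType) N (v : 'cV[R[i]]_N) : l1norm v = 1 -> v != 0.
Proof.
move=> h; apply/eqP => v0; move: h; rewrite /l1norm v0.
under eq_bigr do rewrite mxE normr0.
by rewrite big1 // => /eqP; rewrite eq_sym oner_eq0.
Qed.

Lemma l1Z (R : realType) N (k : R[i]) (v : 'cV[R[i]]_N) :
  l1norm (k *: v) = `|k| * l1norm v.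
Proof.
rewrite /l1norm mulr_sumr; apply: eq_bigr => j _.
by rewrite mxE normrM.
Qed.

Lemma TV_eig (R : realType) N (A : 'M[R[i]]_N) lmax l (v : 'cV[R[i]]_N) :
  0 < `|lmax| -> A *m v = l *: v -> l1norm v = 1 ->
  TV_G A lmax v = `| `|lmax| - l | / `|lmax|.
Proof.
move=> c0 Av nv.
rewrite /TV_G /Anorm -scalemxAl Av scalerA -{1}(scale1r v) -scalerBl l1Z nv mulr1.
have cnz : `|lmax| != 0 by rewrite gt_eqF.
have -> : 1 - `|lmax|^-1 * l = (`|lmax| - l) / `|lmax|.
  by rewrite mulrBl divff // mulrC.
by rewrite normrM normfV normr_id.
Qed.

Theorem theorem2 (R : realType) (N : nat) (A : 'M[R[i]]_N)
  (lmax lm ln : R[i]) (vm vn : 'cV[R[i]]_N) :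
  A != 0 ->
  eigenvalue A lmax ->
  (forall l : R[i], eigenvalue A l -> `|l| <= `|lmax|) ->
  lm != ln ->
  A *m vm = lm *: vm -> A *m vn = ln *: vn ->
  l1norm vm = 1 -> l1norm vn = 1 ->
  `|Num.norm lmax - lm| < `|Num.norm lmax - ln| ->
  TV_G A lmax vm < TV_G A lmax vn.
Proof.
move=> _ _ Hmax neq Am An nm nn Hlt.
have em := Hmax _ (@col_eig _ _ _ _ _ (@l1_nz _ _ _ nm) Am).
have en := Hmax _ (@col_eig _ _ _ _ _ (@l1_nz _ _ _ nn) An).
have c0 : 0 < `|lmax|.
  rewrite lt_def normr_ge0 andbT; apply/negP => /eqP c0.
  move: em en; rewrite c0 !normr_le0 => /eqP e1 /eqP e2.
  by move: neq; rewrite e1 e2 eqxx.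
rewrite (@TV_eig _ _ _ _ _ _ c0 Am nm) (@TV_eig _ _ _ _ _ _ c0 An nn).
by rewrite ltr_pM2r // invr_gt0.
Qed.
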